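(* Let $k$ be a field of characteristic $p>0$ and $A$ an infinite-dimensional $k$-vector space. For every $r\ge0$, $S_{\le r}A\neq SA$.
   Context: $SA=\bigoplus_{m\ge0}S^mA$ is the symmetric algebra of $A$ ($S^0A=k$, $S^mA$ the $m$-th symmetric power, with pure symmetric tensors $a_1\otimes_s\dots\otimes_s a_m$). The linear map $\partial\colon SA\to SA\otimes A$ is given by $\partial(\lambda)=0$ for $\lambda\in S^0A$ and $\partial(a_1\otimes_s\dots\otimes_s a_m)=\sum_{i=1}^m(a_1\otimes_s\dots\otimes_s a_{i-1}\otimes_s a_{i+1}\otimes_s\dots\otimes_s a_m)\otimes a_i$. Iterates: $\partial^0=1_{SA}$ and $\partial^{r+1}:=\partial;(\partial^r\otimes 1_A)\colon SA\to SA\otimes A^{\otimes(r+1)}$. Define $S_{\le r}A:=\ker(\partial^{r+1})\subseteq SA$. *)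

(* Defs.v *)
From HB Require Import structures.
From mathcomp Require Import all_boot all_order all_algebra.
Set Implicit Arguments. Unset Strict Implicit. Unset Printing Implicit Defensive.
Import GRing.Theory.
Local Open Scope ring_scope.

(* Symmetric algebra SA and the spaces SA (x) A^{(x)n} of an arbitrary
   k-vector space A, presented by generators and relations:
   a pure tensor (a_1 (x)_s ... (x)_s a_m) (x) (b_1 (x) ... (x) b_n) is the key
   ([:: a_1; ...; a_m], [:: b_1; ...; b_n]); a formal sum is a finite list of
   (coefficient, key).  A formal sum is zero in
   \bigoplus_m S^m A (x) A^{(x)n} iff it lies in the span (in the free vector
   space on keys) of the multilinearity relations in every slot and of the
   symmetry relations (adjacent transpositions) in the symmetric slots. *)

Section SymAlg.
Variables (k : fieldType) (A : lmodType k).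

Definition key := (seq A * seq A)%type.
Definition fsum := seq (k * key).

Definition coeff (t : fsum) (x : key) : k :=
  \sum_(q <- t) (if q.2 == x then q.1 else 0).

Inductive tensor_rel : fsum -> Prop :=
| rel_sym_add u v w (a b : A) :
    tensor_rel [:: (1, (u ++ (a + b) :: v, w)); (-1, (u ++ a :: v, w));
                   (-1, (u ++ b :: v, w))]
| rel_sym_scale u v w (d : k) (a : A) :
    tensor_rel [:: (1, (u ++ (d *: a) :: v, w)); (- d, (u ++ a :: v, w))]
| rel_sym_swap u v w (a b : A) :
    tensor_rel [:: (1, (u ++ a :: b :: v, w)); (-1, (u ++ b :: a :: v, w))]
| rel_ten_add m u v (a b : A) :
    tensor_rel [:: (1, (m, u ++ (a + b) :: v)); (-1, (m, u ++ a :: v));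
                   (-1, (m, u ++ b :: v))]
| rel_ten_scale m u v (d : k) (a : A) :
    tensor_rel [:: (1, (m, u ++ (d *: a) :: v)); (- d, (m, u ++ a :: v))].

Definition null (t : fsum) : Prop :=
  exists gs : seq (k * fsum),
    (forall g, g \in gs -> tensor_rel g.2) /\
    forall x, coeff t x = \sum_(g <- gs) g.1 * coeff g.2 x.

Definition sym_elt := seq (k * seq A).

Definition drop_at (m : seq A) (i : nat) := take i m ++ drop i.+1 m.

(* \partial^r on a pure symmetric tensor m, following
   \partial^0 = 1, \partial^{r+1} = \partial ; (\partial^r (x) 1_A),
   \partial(a_1..a_m) = \sum_i (a_1..^a_i..a_m) (x) a_i. *)
Fixpoint dpow (r : nat) (m : seq A) : fsum :=
  match r with
  | 0 => [:: (1, (m, [::]))]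
  | r'.+1 =>
      flatten [seq [seq (q.1, (q.2.1, rcons q.2.2 (nth 0 m i)))
                   | q <- dpow r' (drop_at m i)]
              | i <- iota 0 (size m)]
  end.

Definition dpowS (r : nat) (t : sym_elt) : fsum :=
  flatten [seq [seq (q.1 * p.1, p.2) | p <- dpow r q.2] | q <- t].

(* membership in S_{<= r} A = ker \partial^{r+1} *)
Definition S_le (r : nat) (t : sym_elt) : Prop := null (dpowS r.+1 t).

Definition infinite_dim : Prop :=
  ~ exists s : seq A, forall a : A,
      exists c : seq k, a = \sum_(i < size s) c`_i *: s`_i.

End SymAlg.

(* Main.v *)
Require Import Defs.
From HB Require Import structures.
From mathcomp Require Import all_boot all_order all_algebra.
From mathcomp Require Import ring zify.
From Stdlib Require Import Classical ClassicalEpsilon.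
Set Implicit Arguments. Unset Strict Implicit. Unset Printing Implicit Defensive.
Import GRing.Theory.
Local Open Scope ring_scope.

Section Lin.
Variables (k : fieldType) (A : lmodType k).

Definition lc (c : seq k) (B : seq A) : A := \sum_(0 <= i < size B) c`_i *: B`_i.
Definition spanB B x := exists c, x = lc c B.
Definition indep B := forall c, lc c B = 0 -> forall i, (i < size B)%N -> c`_i = 0.

Lemma lc_add B c c' :
  lc (mkseq (fun i => c`_i + c'`_i) (size B)) B = lc c B + lc c' B.
Proof.
rewrite /lc -big_split /=; apply: eq_big_nat => i /andP[_ hi].
by rewrite nth_mkseq // scalerDl.
Qed.

Lemma lc_scale B c d :
  lc (mkseq (fun i => d * c`_i) (size B)) B = d *: lc c B.
Proof.
rewrite /lc scaler_sumr; apply: eq_big_nat => i /andP[_ hi].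
by rewrite nth_mkseq // scalerA.
Qed.

Lemma lc_uniq B c c' : indep B -> lc c B = lc c' B ->
  forall i, (i < size B)%N -> c`_i = c'`_i.
Proof.
move=> hB he i hi.
pose d := mkseq (fun i => c`_i + (- c'`_i)) (size B).
have: lc d B = 0.
  have -> : lc d B = lc c B + lc (mkseq (fun i => (-1) * c'`_i) (size B)) B.
    rewrite -lc_add /lc; apply: eq_big_nat => j /andP[_ hj].
    by rewrite !nth_mkseq // mulN1r.
  by rewrite lc_scale he scaleN1r subrr.
move=> /hB /(_ i hi); rewrite nth_mkseq // => /eqP; rewrite addr_eq0 opprK.
by move/eqP.
Qed.

Definition coords B x : seq k :=
  match excluded_middle_informative (spanB B x) with
  | left h => proj1_sig (constructive_indefinite_description _ h)
  | right _ => [::]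
  end.

Lemma coordsP B x : spanB B x -> x = lc (coords B x) B.
Proof.
move=> h; rewrite /coords; case: excluded_middle_informative => // h'.
exact: (proj2_sig (constructive_indefinite_description _ h')).
Qed.

Lemma coords_add B x y j : indep B -> spanB B x -> spanB B y -> (j < size B)%N ->
  (coords B (x + y))`_j = (coords B x)`_j + (coords B y)`_j.
Proof.
move=> hB hx hy hj.
have e : x + y = lc (mkseq (fun i => (coords B x)`_i + (coords B y)`_i) (size B)) B.
  by rewrite lc_add -!coordsP.
have sxy : spanB B (x + y) by exists (mkseq (fun i => (coords B x)`_i + (coords B y)`_i) (size B)).
by rewrite (lc_uniq hB (etrans (esym (coordsP sxy)) e) hj) nth_mkseq.
Qed.

Lemma coords_scale B d x j : indep B -> spanB B x -> (j < size B)%N ->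
  (coords B (d *: x))`_j = d * (coords B x)`_j.
Proof.
move=> hB hx hj.
have e : d *: x = lc (mkseq (fun i => d * (coords B x)`_i) (size B)) B.
  by rewrite lc_scale -!coordsP.
have sxy : spanB B (d *: x) by exists (mkseq (fun i => d * (coords B x)`_i) (size B)).
by rewrite (lc_uniq hB (etrans (esym (coordsP sxy)) e) hj) nth_mkseq.
Qed.

Lemma lc_nth B i : (i < size B)%N -> lc (mkseq (fun l => (l == i)%:R) (size B)) B = B`_i.
Proof.
move=> hi; rewrite /lc (bigD1_seq i) ?mem_index_iota ?iota_uniq //=.
rewrite nth_mkseq // eqxx scale1r big1 ?addr0 // => j /negbTE hj.
case: (ltnP j (size B)) => hjs; first by rewrite nth_mkseq // hj scale0r.
by rewrite nth_default ?size_mkseq // scale0r.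
Qed.

Lemma span_nth B i : (i < size B)%N -> spanB B B`_i.
Proof. by move=> hi; exists (mkseq (fun l => (l == i)%:R) (size B)); rewrite lc_nth. Qed.

Lemma coords_nth B i j : indep B -> (i < size B)%N -> (j < size B)%N ->
  (coords B B`_i)`_j = (j == i)%:R.
Proof.
move=> hB hi hj.
have e := etrans (esym (coordsP (span_nth hi))) (esym (lc_nth hi)).
by rewrite (lc_uniq hB e) // nth_mkseq.
Qed.

Lemma lc_rcons B x c : lc c (rcons B x) = lc c B + c`_(size B) *: x.
Proof.
rewrite /lc size_rcons big_nat_recr //= nth_rcons ltnn eqxx; congr (_ + _).
by apply: eq_big_nat => i /andP[_ hi]; rewrite nth_rcons hi.
Qed.

Lemma indep_rcons B x : indep B -> ~ spanB B x -> indep (rcons B x).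
Proof.
move=> hB hx c h.
have hc : c`_(size B) = 0.
  apply/eqP; apply/negPn/negP => hn; apply: hx.
  exists (mkseq (fun i => (- (c`_(size B))^-1) * c`_i) (size B)).
  rewrite lc_scale; move: h; rewrite lc_rcons => /eqP; rewrite addr_eq0 => /eqP ->.
  by rewrite scaleNr scalerN opprK scalerA mulVf // scale1r.
move: h; rewrite lc_rcons hc scale0r addr0 => h i; rewrite size_rcons ltnS leq_eqVlt.
by case/orP => [/eqP -> //|]; apply: hB.
Qed.

Lemma span_mono B e x : spanB B x -> spanB (B ++ e) x.
Proof.
case=> c ->; exists (mkseq (nth 0 c) (size B)).
rewrite /lc size_cat [RHS](big_cat_nat _ (n := size B)) ?leq_addr //=.
rewrite [X in _ = _ + X]big1_seq ?addr0; last first.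
  move=> i /andP[_]; rewrite mem_index_iota => /andP[hi _].
  by rewrite (nth_default (0:k) (s := mkseq (nth 0 c) (size B))) ?size_mkseq // scale0r.
by apply: eq_big_nat => i /andP[_ hi]; rewrite nth_mkseq // nth_cat hi.
Qed.

Lemma extend (s : seq A) : forall B, indep B ->
  exists e, indep (B ++ e) /\ forall x, x \in s -> spanB (B ++ e) x.
Proof.
elim: s => [|x s IH] B hB.
  by exists [::]; rewrite cats0; split.
case: (classic (spanB B x)) => hx.
  have [e [he hs]] := IH B hB; exists e; split => // y.
  by rewrite in_cons => /orP[/eqP -> |/hs]; first exact: span_mono.
have hB' := indep_rcons hB hx.
have [e [he hs]] := IH _ hB'; exists (x :: e); rewrite -cat_rcons; split => // y.
rewrite in_cons => /orP[/eqP -> |/hs //]; apply: span_mono.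
by have := span_nth (B := rcons B x) (i := size B); rewrite nth_rcons ltnn eqxx size_rcons; apply.
Qed.

Lemma exists_indep : infinite_dim A -> forall n, exists a, size a = n /\ indep a.
Proof.
move=> hA; elim=> [|n [a [sa ia]]].
  by exists [::]; split => // c _ i.
have : ~ forall x, spanB a x.
  move=> hall; apply: hA; exists a => x; have [c ->] := hall x.
  by exists c; rewrite /lc big_mkord.
move=> /not_all_ex_not [x hx]; exists (rcons a x); split; first by rewrite size_rcons sa.
exact: indep_rcons.
Qed.

End Lin.

Section Inv.
Variables (k : fieldType) (A : lmodType k).

Definition Phi (ph : key A -> k) (t : fsum A) : k := \sum_(q <- t) q.1 * ph q.2.

Definition phi (f : nat -> A -> k) (j : nat) (x : key A) : k :=
  if (x.1 == [::]) && (size x.2 == j) then \prod_(l < j) f l (nth 0 x.2 l) else 0.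

Lemma Phi_coeff ph (t : fsum A) X : uniq X -> {subset [seq q.2 | q <- t] <= X} ->
  Phi ph t = \sum_(x <- X) coeff t x * ph x.
Proof.
move=> hX; elim: t => [|q t IH] hsub.
  by rewrite /Phi big_nil big1 // => x _; rewrite /coeff big_nil mul0r.
have hc : forall x, coeff (q :: t) x = (if q.2 == x then q.1 else 0) + coeff t x.
  by move=> x; rewrite /coeff big_cons.
under eq_bigr do rewrite hc mulrDl.
rewrite big_split /= /Phi big_cons -/(Phi ph t) IH; last first.
  by move=> y hy; apply: hsub; rewrite /= in_cons hy orbT.
congr (_ + _).
rewrite (bigD1_seq q.2) //=; last by apply: hsub; rewrite /= in_cons eqxx.
rewrite eqxx big1 ?addr0 // => x /negbTE hx; by rewrite eq_sym hx mul0r.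
Qed.

Lemma phi_rcons f j x w y : phi f j.+1 (x, rcons w y) = phi f j (x, w) * f j y.
Proof.
rewrite /phi /= size_rcons eqSS; case: ifP => [/andP[_ /eqP hs]|]; last by rewrite mul0r.
rewrite big_ord_recr /= nth_rcons hs ltnn eqxx; congr (_ * _).
by apply: eq_bigr => l _; rewrite nth_rcons /= hs ltn_ord.
Qed.

Lemma Phi_dpow f j m : Phi (phi f j.+1) (dpow j.+1 m) =
  \sum_(i <- iota 0 (size m)) f j (nth 0 m i) * Phi (phi f j) (dpow j (drop_at m i)).
Proof.
have -> : dpow j.+1 m = flatten [seq [seq (q.1, (q.2.1, rcons q.2.2 (nth 0 m i)))
                   | q <- dpow j (drop_at m i)] | i <- iota 0 (size m)] by [].
rewrite /Phi big_flatten /= big_map; apply: eq_bigr => i _.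
rewrite big_map mulr_sumr; apply: eq_bigr => -[c [x w]] _ /=.
by rewrite phi_rcons mulrA mulrC.
Qed.

Lemma dpow_val f (a : seq A) (hf : forall l i, (l < size a)%N -> (i < size a)%N ->
    f l a`_i = (i == l)%:R) :
  forall j, (j <= size a)%N -> Phi (phi f j) (dpow j (take j a)) = 1.
Proof.
elim=> [|j IH] hj.
  by rewrite /Phi /= big_cons big_nil /phi /= big_ord0 take0 /= mulr1 addr0.
rewrite (Phi_dpow f j (take j.+1 a)) size_takel //.
change (iota 0 j.+1) with (index_iota 0 j.+1).
rewrite big_nat_recr //= big1_seq ?add0r; last first.
  move=> i /andP[_]; rewrite mem_index_iota => /andP[_ hi].
  rewrite nth_take; last lia.
  rewrite hf; [|lia|lia].
  by rewrite (ltn_eqF hi) mul0r.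
rewrite nth_take // hf // eqxx mul1r /drop_at take_takel // drop_oversize ?cats0.
  by apply: IH; apply: ltnW.
by rewrite size_takel.
Qed.

Lemma prod_split (f : nat -> A -> k) n (u v : seq A) x (hu : (size u < n)%N) :
  \prod_(l < n) f l (nth 0 (u ++ x :: v) l) =
  f (size u) x * \prod_(l < n | l != Ordinal hu) f l (nth 0 (u ++ 0 :: v) l).
Proof.
rewrite (bigD1 (Ordinal hu)) //= nth_cat ltnn subnn /=; congr (_ * _).
apply: eq_bigr => l hl; congr (f _ _); rewrite !nth_cat.
case: ltnP => // hge.
have hne : val l != size u by apply: contra hl => /eqP h; apply/eqP; apply: val_inj.
case E: (l - size u)%N => [|k0] //.
by move: hne; rewrite eqn_leq hge andbT -subn_eq0 E.
Qed.

Lemma cat_cons_nil (u : seq A) x v : (u ++ x :: v == [::]) = false.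
Proof. by case: u. Qed.

Lemma Phi_rel (f : nat -> A -> k) n (P : A -> Prop) g :
  (forall l x y, (l < n)%N -> P x -> P y -> f l (x + y) = f l x + f l y) ->
  (forall l d x, (l < n)%N -> P x -> f l (d *: x) = d * f l x) ->
  (forall q x, q \in g -> x \in q.2.1 ++ q.2.2 -> P x) ->
  tensor_rel g -> Phi (phi f n) g = 0.
Proof.
move=> hadd hsc hP hg; case: g / hg hP => [u v w a b|u v w d a|u v w a b|m u v a b|m u v d a] hP;
  rewrite /Phi !big_cons big_nil /phi /= ?cat_cons_nil /= ?mulr0 ?addr0 //.
- rewrite !size_cat /=; case: ifP => [/andP[_ /eqP hs]|_]; last by rewrite !mulr0 !addr0.
  have hu : (size u < n)%N by rewrite -hs addnS ltnS leq_addr.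
  rewrite !(prod_split _ _ _ hu) hadd //.
  + ring.
  + apply: (hP (-1, (m, u ++ a :: v))); first by rewrite !inE eqxx !orbT.
    by rewrite /= !mem_cat in_cons eqxx /= !orbT.
  + apply: (hP (-1, (m, u ++ b :: v))); first by rewrite !inE eqxx !orbT.
    by rewrite /= !mem_cat in_cons eqxx /= !orbT.
- rewrite !size_cat /=; case: ifP => [/andP[_ /eqP hs]|_]; last by rewrite !mulr0 !addr0.
  have hu : (size u < n)%N by rewrite -hs addnS ltnS leq_addr.
  rewrite !(prod_split _ _ _ hu) hsc //.
  + ring.
  + apply: (hP (-d, (m, u ++ a :: v))); first by rewrite !inE eqxx !orbT.
    by rewrite /= !mem_cat in_cons eqxx /= !orbT.
Qed.

End Inv.

Theorem proposition7p8 (k : fieldType) (p : nat) (hp : prime p)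
  (hchar : p \in [pchar k]) (A : lmodType k) (hA : infinite_dim A) (r : nat) :
  ~ (forall t : sym_elt A, S_le r t).
Proof.
move=> H.
have [a [sa ia]] := exists_indep hA r.+1.
have [gs [hrel hco]] := H [:: (1, a)].
pose s := flatten [seq flatten [seq q.2.1 ++ q.2.2 | q <- g.2] | g <- gs].
have [e [iB sB]] := extend s ia.
pose B := a ++ e.
pose f l x := (coords B x)`_l.
have hsz : (r.+1 <= size B)%N by rewrite size_cat sa leq_addr.
have hf : forall l i, (l < size a)%N -> (i < size a)%N -> f l a`_i = (i == l)%:R.
  move=> l i hl hi.
  have -> : a`_i = B`_i by rewrite /B nth_cat hi.
  rewrite /f coords_nth //; first by rewrite eq_sym.
    by rewrite size_cat (leq_trans hi) ?leq_addr.
  by rewrite size_cat (leq_trans hl) ?leq_addr.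
have h1 : Phi (phi f r.+1) (dpowS r.+1 [:: (1, a)]) = 1.
  have -> : dpowS r.+1 [:: (1, a)] = [seq (1 * q.1, q.2) | q <- dpow r.+1 a].
    by rewrite /dpowS /= cats0.
  rewrite /Phi big_map.
  under eq_bigr do rewrite mul1r.
  have := dpow_val hf (leqnn (size a)).
  by rewrite take_size sa /Phi => ->.
have h0 : Phi (phi f r.+1) (dpowS r.+1 [:: (1, a)]) = 0.
  set T := dpowS r.+1 [:: (1, a)].
  pose X := undup ([seq q.2 | q <- T] ++ flatten [seq [seq q.2 | q <- g.2] | g <- gs]).
  rewrite (@Phi_coeff _ _ _ _ X) ?undup_uniq //; last first.
    by move=> x hx; rewrite mem_undup mem_cat hx.
  transitivity (\sum_(x <- X) \sum_(g <- gs) g.1 * (coeff g.2 x * phi f r.+1 x)).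
    by apply: eq_bigr => x _; rewrite hco mulr_suml; apply: eq_bigr => g _; rewrite mulrA.
  rewrite exchange_big /=; apply: big1_seq => g /andP[_ hg].
  rewrite -mulr_sumr -(@Phi_coeff _ _ _ _ X) ?undup_uniq //; last first.
    move=> x hx; rewrite mem_undup mem_cat; apply/orP; right.
    by apply/flatten_mapP; exists g.
  rewrite (@Phi_rel _ _ f r.+1 (spanB B)) ?mulr0 //.
  - move=> l x y hl hx hy; rewrite /f coords_add //; exact: leq_trans hl hsz.
  - move=> l d x hl hx; rewrite /f coords_scale //; exact: leq_trans hl hsz.
  - move=> q x hq hx; apply: sB.
    apply/flatten_mapP; exists g => //.
    by apply/flatten_mapP; exists q.
  - exact: hrel.
by move: h1; rewrite h0 => /eqP; rewrite eq_sym oner_eq0.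
Qed.
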